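(* Let $K_n(\lambda)$ be defined by $K_0=2$, $K_1=1$, $K_2=\lambda-2$, $K_3=\lambda-3$, $K_{2p+1}=(\lambda-2)K_{2p-1}-K_{2p-3}$ and $K_{2p}=(\lambda-2)K_{2p-2}-K_{2p-4}$ ($p\ge2$), and let $q(\lambda)=\lambda^2-4\lambda$. Then for $p\ge0$: $$K_{2p}(\lambda)=\frac{1}{2^{p-1}}\sum_{i=0}^{\lfloor p/2\rfloor}\binom{p}{2i}(\lambda-2)^{p-2i}q(\lambda)^i,$$ $$K_{2p+1}(\lambda)=\frac{1}{2^{p}}\sum_{i=0}^{\lfloor p/2\rfloor}\binom{p}{2i}(\lambda-2)^{p-2i}q(\lambda)^i+\frac{\lambda-4}{2^{p}}\sum_{i=0}^{\lfloor (p-1)/2\rfloor}\binom{p}{2i+1}(\lambda-2)^{p-2i-1}q(\lambda)^i.$$ *)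

(* Defs.v *)
From mathcomp Require Import all_boot all_order all_algebra.
Set Implicit Arguments. Unset Strict Implicit. Unset Printing Implicit Defensive.
Import Order.TTheory GRing.Theory Num.Theory.
Local Open Scope ring_scope.

Fixpoint Kseq (R : nzRingType) (lam : R) (n : nat) : R :=
  match n with
  | 0 => 2
  | 1 => 1
  | 2 => lam - 2
  | 3 => lam - 3
  | S (S ((S (S m)) as m2)) => (lam - 2) * Kseq lam m2 - Kseq lam m
  end.

Definition qpol (R : nzRingType) (lam : R) : R := lam ^+ 2 - 4 * lam.

(* Main.v *)
Require Import Defs.
From mathcomp Require Import all_boot all_order all_algebra.
From mathcomp Require Import ring zify.
Import Order.TTheory GRing.Theory Num.Theory.
Local Open Scope ring_scope.

Section Aux.
Variable R : realFieldType.
Variable lam : R.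

Definition xx : R := lam - 2.
Definition ff (k : nat) : R := if odd k then 0 else qpol lam ^+ k./2.
Definition gg (k : nat) : R := if odd k then qpol lam ^+ k./2 else 0.

Lemma ffS k : ff k.+1 = qpol lam * gg k.
Proof. rewrite /ff /gg -uphalfE uphalf_half /=; case: (odd k) => /=; last by rewrite mulr0.
by rewrite exprS.
Qed.
Lemma ggS k : gg k.+1 = ff k.
Proof. rewrite /ff /gg -uphalfE uphalf_half /=; case: (odd k) => //=. Qed.

Definition SS (p : nat) : R := \sum_(0 <= k < p.+1) 'C(p, k)%:R * xx ^+ (p - k) * ff k.
Definition TT (p : nat) : R := \sum_(0 <= k < p.+1) 'C(p, k)%:R * xx ^+ (p - k) * gg k.

Lemma gen_rec (h h' : nat -> R) (c : R) (hS : forall k, h k.+1 = c * h' k) p :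
  \sum_(0 <= k < p.+2) 'C(p.+1, k)%:R * xx ^+ (p.+1 - k) * h k =
  xx * \sum_(0 <= k < p.+1) 'C(p, k)%:R * xx ^+ (p - k) * h k +
  c * \sum_(0 <= k < p.+1) 'C(p, k)%:R * xx ^+ (p - k) * h' k.
Proof.
rewrite big_nat_recl // bin0 subn0.
under eq_big_nat => k _ do rewrite binS subSS natrD !mulrDl.
rewrite big_split /= big_nat_recr //= bin_small // mul0r mul0r addr0.
rewrite [in RHS]big_distrr /= [in RHS]big_nat_recl //= bin0 subn0.
rewrite [in RHS]big_distrr /=.
rewrite addrA !mul1r exprS -mulrA; congr (_ + _ + _).
  apply: eq_big_nat => k /andP[_ Hk]; rewrite !mulrA [xx * _]mulrC -!mulrA; congr (_ * _).
  by rewrite mulrA -exprS subnSK.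
by apply: eq_big_nat => k _; rewrite hS mulrA [c * _]mulrC -!mulrA [c * _]mulrC.
Qed.

Lemma SS_rec p : SS p.+1 = xx * SS p + qpol lam * TT p.
Proof. by rewrite /SS /TT (@gen_rec ff gg (qpol lam) ffS). Qed.
Lemma TT_rec p : TT p.+1 = xx * TT p + 1 * SS p.
Proof. by rewrite /SS /TT (@gen_rec gg ff 1) // => k; rewrite ggS mul1r. Qed.

Lemma qx : qpol lam = xx ^+ 2 - 4.
Proof. rewrite /qpol /xx; ring. Qed.

Lemma SS2 p : SS p.+2 = 2 * xx * SS p.+1 - 4 * SS p.
Proof. rewrite !SS_rec !TT_rec ?SS_rec qx; ring. Qed.
Lemma TT2 p : TT p.+2 = 2 * xx * TT p.+1 - 4 * TT p.
Proof. rewrite !TT_rec !SS_rec ?TT_rec qx; ring. Qed.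

End Aux.
Arguments SS {R}. Arguments TT {R}. Arguments xx {R}. Arguments ff {R}. Arguments gg {R}.
Lemma split2 (R : nzRingType) (F : nat -> R) m :
  \sum_(0 <= k < 2 * m) F k = \sum_(0 <= i < m) F (2 * i)%N + \sum_(0 <= i < m) F (2 * i + 1)%N.
Proof.
elim: m => [|m IH]; first by rewrite !big_geq // addr0.
rewrite (_ : (2 * m.+1 = (2 * m).+2)%N); last by lia.
rewrite !big_nat_recr //= IH addn1; rewrite -!addrA; congr (_ + _).
by rewrite addrCA.
Qed.

Lemma ext_sum (R : nzRingType) (F : nat -> R) a b : (a <= b)%N ->
  (forall k, (a <= k)%N -> F k = 0) -> \sum_(0 <= k < b) F k = \sum_(0 <= k < a) F k.
Proof.
move=> ab H; rewrite (big_cat_nat _ (n := a)) //=.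
have -> : \sum_(a <= k < b) F k = 0.
  by rewrite big_nat_cond big1 // => k /andP[/andP[Hk _] _]; exact: H.
by rewrite addr0.
Qed.

Definition Kd (R : nzRingType) (lam : R) n := Kseq lam n.
Arguments Kd {R} lam n : simpl never.

Lemma Kd_step (R : nzRingType) (lam : R) n : Kd lam n.+4 = (lam - 2) * Kd lam n.+2 - Kd lam n.
Proof. by []. Qed.

Lemma K_lem {R : realFieldType} (lam : R) p :
  (Kd lam p.*2 = 2 * SS lam p / 2 ^+ p /\
   Kd lam p.*2.+1 = (SS lam p + (lam - 4) * TT lam p) / 2 ^+ p) /\
  (Kd lam p.+1.*2 = 2 * SS lam p.+1 / 2 ^+ p.+1 /\
   Kd lam p.+1.*2.+1 = (SS lam p.+1 + (lam - 4) * TT lam p.+1) / 2 ^+ p.+1).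
Proof.
have S0 : SS lam 0 = 1 by rewrite /SS big_nat1 /ff /= mulr1 mul1r.
have T0 : TT lam 0 = 0 by rewrite /TT big_nat1 /gg /= mulr0.
have h2 : (2 : R) != 0 by rewrite pnatr_eq0.
elim: p => [|p [IH1 [IH2 IH3]]].
  rewrite /Kd /= SS_rec TT_rec S0 T0 /xx; split; split; field; done.
split; first exact: (conj IH2 IH3).
have e1 : p.+1.*2 = (p.*2).+2 by rewrite doubleS.
have e2 : p.+2.*2 = (p.*2).+4 by rewrite !doubleS.
rewrite e1 in IH2 IH3; rewrite e2 (@Kd_step _ lam (p.*2)) (@Kd_step _ lam (p.*2).+1).
rewrite IH1.1 IH1.2 IH2 IH3 SS2 TT2 /xx !exprS.
have hp : (2 : R) ^+ p != 0 by rewrite expf_neq0.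
split; field; exact: hp.
Qed.

Lemma SSsum {R : realFieldType} (lam : R) p : SS lam p =
  \sum_(0 <= i < (p %/ 2).+1) 'C(p, 2 * i)%:R * (lam - 2) ^+ (p - 2 * i) * qpol lam ^+ i.
Proof.
rewrite /SS -(@ext_sum _ (fun k => 'C(p,k)%:R * xx lam ^+ (p-k) * ff lam k) p.+1 (2 * (p %/ 2).+1));
  last 2 first.
- lia.
- by move=> k hk; rewrite bin_small ?mul0r.
rewrite split2.
have -> : \sum_(0 <= i < (p %/ 2).+1) 'C(p, 2 * i + 1)%:R * xx lam ^+ (p - (2 * i + 1)) * ff lam (2 * i + 1) = 0.
  by rewrite big1 // => i _; rewrite /ff addn1 /= mul2n odd_double /= mulr0.
rewrite addr0; apply: eq_big_nat => i _.
by rewrite /ff !mul2n odd_double doubleK.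
Qed.

Lemma TTsum {R : realFieldType} (lam : R) p : TT lam p =
  \sum_(0 <= i < p.+1 %/ 2) 'C(p, 2 * i + 1)%:R * (lam - 2) ^+ (p - 2 * i - 1) * qpol lam ^+ i.
Proof.
rewrite /TT -(@ext_sum _ (fun k => 'C(p,k)%:R * xx lam ^+ (p-k) * gg lam k) p.+1 (2 * (p %/ 2).+1));
  last 2 first.
- lia.
- by move=> k hk; rewrite bin_small ?mul0r.
rewrite split2.
have -> : \sum_(0 <= i < (p %/ 2).+1) 'C(p, 2 * i)%:R * xx lam ^+ (p - (2 * i)) * gg lam (2 * i) = 0.
  by rewrite big1 // => i _; rewrite /gg mul2n odd_double mulr0.
rewrite add0r (@ext_sum _ _ (p.+1 %/ 2)); last 2 first.
- lia.
- move=> k hk; rewrite bin_small ?mul0r //; lia.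
apply: eq_big_nat => i _.
rewrite /gg addn1 /= !mul2n odd_double /=.
by rewrite uphalf_double subnS subn1.
Qed.

Theorem lemma6 (R : realFieldType) (lam : R) (p : nat) :
  Kseq lam p.*2 =
    ((2 : R) ^ (p%:Z - 1))^-1 *
      \sum_(0 <= i < (p %/ 2).+1)
         'C(p, 2 * i)%:R * (lam - 2) ^+ (p - 2 * i) * qpol lam ^+ i
  /\
  Kseq lam p.*2.+1 =
    ((2 : R) ^+ p)^-1 *
      \sum_(0 <= i < (p %/ 2).+1)
         'C(p, 2 * i)%:R * (lam - 2) ^+ (p - 2 * i) * qpol lam ^+ i
    + (lam - 4) / (2 : R) ^+ p *
      \sum_(0 <= i < p.+1 %/ 2)
         'C(p, 2 * i + 1)%:R * (lam - 2) ^+ (p - 2 * i - 1) * qpol lam ^+ i.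
Proof.
have [[A B] _] := K_lem lam p.
have h2 : (2 : R) != 0 by rewrite pnatr_eq0.
have hp : (2 : R) ^+ p != 0 by rewrite expf_neq0.
change (Kseq lam p.*2) with (Kd lam p.*2); change (Kseq lam p.*2.+1) with (Kd lam p.*2.+1).
rewrite A B -SSsum -TTsum expfzDr // exprN1 -exprnP; split; field; by rewrite ?hp ?h2.
Qed.
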